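(* Let $p$ be a positive integer and $\mathbb{K}$ a field with $\#\mathbb{K}>p$. Let $E$ be an $n$-dimensional $\mathbb{K}$-vector space and $(E_i)_{i\in I}$ a family of $(n-1)p+1$ linear subspaces of $E$ in which exactly $p+1$ subspaces have dimension $n-1$ and, for each $k\in\{1,\dots,n-2\}$, exactly $p$ subspaces have dimension $k$. Then $E\not\subset\bigcup_{i\in I}E_i$. Consequently, if $(E_i)_{i\in I}$ is a family of $(n-1)p$ linear subspaces of $E$ in which, for each $k\in\{1,\dots,n-1\}$, exactly $p$ subspaces have dimension $k$, then there exists a basis of $E$ none of whose vectors lies in $\bigcup_{i\in I}E_i$. *)

(* Defs.v *)
From HB Require Import structures.
From mathcomp Require Import all_boot all_order all_algebra.
Set Implicit Arguments. Unset Strict Implicit. Unset Printing Implicit Defensive.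
Import GRing.Theory.

(* "#K > p": the (possibly infinite) type K has at least p+1 distinct elements. *)
Definition card_gt (K : eqType) (p : nat) : Prop :=
  exists s : seq K, uniq s /\ (p < size s)%N.

(* Main.v *)
Require Import Defs.
From HB Require Import structures.
From mathcomp Require Import all_boot all_order all_algebra.
From mathcomp Require Import zify.
Import GRing.Theory.
Set Implicit Arguments. Unset Strict Implicit. Unset Printing Implicit Defensive.

Lemma sum_by_dim (I : finType) (d : I -> nat) (N : nat) (hd : forall i, d i <= N)
  (h : nat -> nat) :
  \sum_i h (d i) = \sum_(k < N.+1) #|[set i | d i == k]| * h k.
Proof.
have inner : forall i, \sum_(k < N.+1) (d i == k) * h k = h (d i).
  move=> i; rewrite (bigD1 (inord (d i))) //= inordK ?ltnS // eqxx mul1n big1 ?addn0 //.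
  move=> k hk; suff -> : (d i == k) = false by rewrite mul0n.
  apply/negbTE; apply: contra hk => /eqP e.
  by apply/eqP/val_inj; rewrite /= inordK ?ltnS // e.
rewrite -(eq_bigr _ (fun i _ => inner i)) exchange_big /=.
apply: eq_bigr => k _; rewrite -big_distrl /= -sum1dep_card.
by rewrite [in RHS]big_mkcond; congr (_ * _); apply: eq_bigr => i _; case: (d i == k).
Qed.

Lemma geom (p m : nat) : (\sum_(k < m) p * p.+1 ^ k).+1 = p.+1 ^ m.
Proof.
elim: m => [|m IH]; first by rewrite big_ord0.
by rewrite big_ord_recr /= -addSn IH expnS mulSn addnC.
Qed.

Lemma split_sum (g : nat -> nat) (m : nat) :
  \sum_(k < m.+3) g k = g 0 + \sum_(k < m) g k.+1 + g m.+1 + g m.+2.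
Proof.
rewrite big_ord_recr /= big_ord_recr /= big_ord_recl /=.
by [].
Qed.

Local Open Scope ring_scope.

Lemma card_bigcup_le (T I : finType) (A : I -> {set T}) :
  (#|\bigcup_i A i| <= \sum_i #|A i|)%N.
Proof.
elim/big_rec2: _ => [|i n U _ leUn]; first by rewrite cards0.
by rewrite (leq_trans (leq_card_setU (A i) U).1) ?leq_add2l.
Qed.

Definition psi (K : fieldType) (E : vectType K) (p m : nat) (c : 'I_p.+1 -> K)
  (b : m.-tuple E) (s : {ffun 'I_m -> 'I_p.+1}) : E :=
  \sum_(j < m) c (s j) *: b`_j.

Lemma grid_bound (K : fieldType) (E : vectType K) (p m : nat) (c : 'I_p.+1 -> K)
  (c_inj : injective c) (b : m.-tuple E) (hb : free b) (d : nat) :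
  forall (U : {vspace E}) (a : E), (\dim U <= d)%N ->
  (#|[set s | (psi c b s - a)%R \in U]| <= p.+1 ^ d)%N.
Proof.
have crd : forall s j, coord b j (psi c b s) = c (s j).
  by move=> s j; rewrite /psi coord_sum_free.
have caseA : forall (U : {vspace E}) a,
    (forall j u, u \in U -> coord b j u = 0) ->
    (#|[set s | (psi c b s - a)%R \in U]| <= 1)%N.
  move=> U a hU; apply/card_le1_eqP => s t; rewrite !inE => hs ht.
  apply/ffunP => j; apply: c_inj.
  have := hU j _ (memvB hs ht).
  rewrite opprB addrA subrK linearB /= !crd => /eqP; rewrite subr_eq0 => /eqP //.
elim: d => [|d IH] U a hU.
  apply: caseA => j u; move: hU; rewrite leqn0 dimv_eq0 => /eqP ->.
  by rewrite memv0 => /eqP ->; rewrite linear0.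
pose f j := linfun (coord b j : E -> K^o).
case: (boolP [forall j, (U <= lker (f j))%VS]) => [/forallP hall|].
  apply: leq_trans (caseA U a _) _; last by rewrite expn_gt0.
  move=> j u uU; move/subvP: (hall j) => /(_ u uU).
  by rewrite memv_ker lfunE /= => /eqP.
rewrite negb_forall => /existsP [j hj].
set U' := (U :&: lker (f j))%VS.
have dU' : (\dim U' <= d)%N.
  have sub : (U' <= U)%VS by apply: capvSl.
  have : (\dim U' < \dim U)%N.
    rewrite ltn_neqAle dimvS // andbT.
    apply: contra hj => /eqP e; move: (dimv_leqif_eq sub) => [_].
    rewrite e eqxx => /esym/eqP <-; exact: capvSr.
  move=> lt; rewrite -ltnS; exact: leq_trans lt hU.
set S := [set s | (psi c b s - a)%R \in U].
have cover : S \subset \bigcup_(t : 'I_p.+1) [set s in S | s j == t].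
  by apply/subsetP => s sS; apply/bigcupP; exists (s j) => //; rewrite inE sS eqxx.
apply: leq_trans (subset_leq_card cover) _.
apply: leq_trans (card_bigcup_le _) _.
rewrite expnS -[X in (_ <= X * _)%N]card_ord -sum_nat_const.
apply: leq_sum => t _.
case: (set_0Vmem [set s in S | s j == t]) => [->|[s0]]; first by rewrite cards0.
rewrite !inE => /andP [s0S /eqP s0t].
apply: leq_trans (IH U' (psi c b s0) dU').
apply: subset_leq_card; apply/subsetP => s; rewrite !inE => /andP [sS /eqP st].
rewrite memv_cap memv_ker lfunE /= linearB /= !crd st s0t subrr eqxx andbT.
have := memvB sS s0S; by rewrite opprB addrA subrK.
Qed.


Lemma core (K : fieldType) (E : vectType K) (p : nat) (hK : card_gt K p)
  (H : {vspace E}) (hH : ((\dim H).+1 = \dim (fullv : {vspace E}))%N)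
  (I : finType) (F : I -> {vspace E}) :
  (\sum_(i | ~~ (F i <= H)%VS) p.+1 ^ (\dim (F i)).-1 < p.+1 ^ \dim H)%N ->
  exists x, x \notin H /\ forall i, x \notin F i.
Proof.
move=> hsum.
case: hK => sK [uK szK].
pose c (t : 'I_p.+1) := nth 0 sK t.
have c_inj : injective c.
  move=> t u; rewrite /c => /eqP; rewrite nth_uniq ?(leq_trans (ltn_ord _) szK) //.
  by move/eqP/val_inj.
pose b := vbasis H.
have hb : free b by apply: basis_free (vbasisP H).
have spb : <<b>>%VS = H by apply: span_basis (vbasisP H).
have [e eH] : exists e, e \notin H.
  have : ~~ (fullv <= H)%VS.
    by apply/negP => /dimvS; rewrite -hH ltnn.
  by case/subvPn => e _ eH; exists e.
have psiH : forall s, psi c b s \in H.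
  move=> s; suff: psi c b s \in <<b>>%VS by rewrite spb.
  rewrite /psi; apply: memv_suml => j _; apply: memvZ.
  by apply: memv_span; apply: mem_nth; rewrite size_tuple.
pose phi s := e + psi c b s.
have phiH : forall s, phi s \notin H.
  move=> s; apply: contra eH => h.
  by have := memvB h (psiH s); rewrite /phi addrK.
have bnd : forall V : {vspace E}, ~~ (V <= H)%VS ->
    (#|[set s | phi s \in V]| <= p.+1 ^ (\dim V).-1)%N.
  move=> V _.
  case: (set_0Vmem [set s | phi s \in V]) => [->|[s0]]; first by rewrite cards0.
  rewrite inE => s0V.
  have lt : (\dim (V :&: H) < \dim V)%N.
    have sub : (V :&: H <= V)%VS by apply: capvSl.
    rewrite ltn_neqAle dimvS // andbT.
    apply/negP => /eqP e1; move: (dimv_leqif_eq sub) => [_].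
    rewrite e1 eqxx => /esym/eqP hVH; move: s0V; rewrite -hVH memv_cap.
    by rewrite (negbTE (phiH s0)) andbF.
  have g := @grid_bound _ _ _ _ _ c_inj _ hb _ (V :&: H)%VS (psi c b s0) (leqnn _).
  apply: leq_trans (leq_trans _ g) _; last first.
    by apply: leq_pexp2l => //; rewrite -ltnS (ltn_predK lt).
  apply: subset_leq_card; apply/subsetP => s; rewrite !inE => sV.
  rewrite memv_cap (memvB (psiH s) (psiH s0)) andbT.
  by have := memvB sV s0V; rewrite /phi opprD addrACA subrr add0r.
pose X := \bigcup_i [set s | phi s \in F i].
have cX : (#|X| < #|{ffun 'I_(\dim H) -> 'I_p.+1}|)%N.
  rewrite card_ffun !card_ord.
  apply: leq_ltn_trans (card_bigcup_le _) _.
  rewrite (bigID (fun i => (F i <= H)%VS)) /= big1 ?add0n.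
    by apply: leq_ltn_trans hsum; apply: leq_sum => i hi; apply: bnd.
  move=> i hi; apply/eqP; rewrite cards_eq0; apply/eqP/setP => s; rewrite !inE.
  by apply: contraNF (phiH s); apply: (subvP hi).
have : ~~ (setT \subset X).
  by apply/negP => /subset_leq_card; rewrite cardsT leqNgt cX.
case/subsetPn => s _; rewrite /X => /bigcupP hs.
exists (phi s); split => // i; apply/negP => hi; apply: hs; exists i => //.
by rewrite inE.
Qed.

Lemma dim_add_out (K : fieldType) (E : vectType K) (W : {vspace E}) v :
  v \notin W -> \dim (W + <[v]>)%VS = (\dim W).+1.
Proof.
move=> vW.
have v0 : v != 0 by apply: contraNneq vW => ->; rewrite mem0v.
rewrite dimv_disjoint_sum ?dim_vline ?v0 ?addn1 //.
apply/eqP; rewrite -subv0; apply/subvP => u; rewrite memv_cap => /andP [uW].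
case/vlineP => k uk; rewrite uk memv0 in uW *.
case: (eqVneq k 0) => [->|kn0]; first by rewrite scale0r.
have := memvZ (k^-1) uW; rewrite scalerA mulVf // scale1r => vW'.
by rewrite vW' in vW.
Qed.

Lemma hyper_ext (K : fieldType) (E : vectType K) : forall k (W : {vspace E}),
  (\dim (fullv : {vspace E}) - (\dim W).+1)%N = k ->
  (\dim W < \dim (fullv : {vspace E}))%N ->
  exists H : {vspace E}, (W <= H)%VS /\ (\dim H).+1 = \dim (fullv : {vspace E}).
Proof.
elim => [|k IH] W hk hW.
  by exists W; split => //; apply/eqP; rewrite eqn_leq hW -subn_eq0 hk.
have : ~~ (fullv <= W)%VS by apply/negP => /dimvS; rewrite leqNgt hW.
case/subvPn => v _ vW.
have h1 : (\dim (fullv : {vspace E}) - (\dim (W + <[v]>)%VS).+1)%N = k.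
  rewrite dim_add_out //; lia.
have h2 : (\dim (W + <[v]>)%VS < \dim (fullv : {vspace E}))%N.
  rewrite dim_add_out //; lia.
have [H [sH hH]] := IH (W + <[v]>)%VS h1 h2.
by exists H; split => //; apply: subv_trans sH; apply: addvSl.
Qed.

Lemma split_sum2 (g : nat -> nat) (m : nat) :
  (\sum_(k < m.+2) g k = g 0 + \sum_(k < m) g k.+1 + g m.+1)%N.
Proof. by rewrite big_ord_recr /= big_ord_recl /=. Qed.

Lemma part2 (K : fieldType) (E : vectType K) (n p : nat)
    (hp : (0 < p)%N) (hK : card_gt K p) (hE : \dim (fullv : {vspace E}) = n) :
  (forall (J : finType) (G : J -> {vspace E}),
      #|J| = ((n - 1) * p)%N ->
      (forall k : nat, (1 <= k <= n - 1)%N -> #|[set j | \dim (G j) == k]| = p) ->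
      exists b : seq E, basis_of fullv b /\ (forall x, x \in b -> forall j, x \notin G j)).
Proof.
move=> J G hJ hk.
have hsum : forall H : {vspace E}, (\dim H).+1 = n ->
    (\sum_(j | ~~ (G j <= H)%VS) p.+1 ^ (\dim (G j)).-1 < p.+1 ^ \dim H)%N.
  move=> H hH.
  have [m hm] : exists m, n = m.+1 by exists (\dim H).
  rewrite hm in hE hJ hk hH; move: hH => [hH].
  pose cnt k := #|[set j | \dim (G j) == k]|.
  have hd : forall j, (\dim (G j) <= m.+1)%N by move=> j; rewrite -hE dimvS ?subvf.
  have ck : forall k, (k < m)%N -> cnt k.+1 = p.
    by move=> k hk'; apply: hk; rewrite ltnS /= subn1 /=.
  have tot := sum_by_dim hd (fun _ => 1%N).
  rewrite sum1_card hJ (split_sum2 (fun k => cnt k * 1)%N) /= in tot.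
  rewrite (eq_bigr (fun _ => p * 1)%N) in tot; last by move=> k _; rewrite ck.
  rewrite sum_nat_const card_ord -/(cnt 0) -/(cnt m.+1) in tot.
  have [c0 cN] : cnt 0 = 0%N /\ cnt m.+1 = 0%N.
    move: tot; rewrite subn1 /= !muln1; move: (cnt 0) (cnt m.+1) (m * p)%N => a b q; lia.
  have tw := sum_by_dim hd (fun k => p.+1 ^ k.-1)%N.
  rewrite (split_sum2 (fun k => cnt k * p.+1 ^ k.-1)%N) /= -/(cnt 0) -/(cnt m.+1) c0 cN !mul0n addn0 add0n in tw.
  rewrite (eq_bigr (fun k : 'I_m => p * p.+1 ^ k)%N) in tw; last by move=> k _; rewrite ck.
  have g := geom p m.
  apply: (leq_ltn_trans (n := (\sum_j p.+1 ^ (\dim (G j)).-1)%N)).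
    rewrite [X in (_ <= X)%N](bigID (fun j => ~~ (G j <= H)%VS)) /=; exact: leq_addr.
  by rewrite tw hH -g.
have step : forall r, (r <= n)%N -> exists b : seq E,
    [/\ size b = r, free b & forall x, x \in b -> forall j, x \notin G j].
  elim => [|r IH] hr.
    by exists [::]; split => //; rewrite /free span_nil dimv0.
  have [b [sb fb hb]] := IH (ltnW hr).
  have db : \dim <<b>>%VS = r by rewrite (eqnP fb).
  have [H [sH hH]] := @hyper_ext K E _ <<b>>%VS (erefl _) ltac:(by rewrite db hE).
  have [x [xH xG]] := core hK hH (hsum H (etrans hH hE)).
  exists (x :: b); split => //=; first by rewrite sb.
    rewrite free_cons fb andbT; apply: contra xH; exact: (subvP sH).
  move=> y; rewrite in_cons => /orP [/eqP ->|yb] //; exact: hb.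
have [b [sb fb hb]] := step n (leqnn n).
exists b; split => //.
by rewrite basisEfree fb subvf /= hE sb leqnn.
Qed.

Lemma part1 (K : fieldType) (E : vectType K) (n p : nat)
    (hp : (0 < p)%N) (hK : card_gt K p) (hE : \dim (fullv : {vspace E}) = n) :
  (forall (I : finType) (F : I -> {vspace E}),
      #|I| = ((n - 1) * p + 1)%N ->
      #|[set i | \dim (F i) == (n - 1)%N]| = p.+1 ->
      (forall k : nat, (1 <= k <= n - 2)%N -> #|[set i | \dim (F i) == k]| = p) ->
      exists x : E, forall i, x \notin F i).
Proof.
move=> I F hI hHyp hk.
have n2 : (1 < n)%N.
  rewrite ltnNge; apply/negP => n1.
  have e : (n - 1 = 0)%N by apply/eqP; rewrite subn_eq0.
  have := subset_leq_card (subsetT [set i | \dim (F i) == (n - 1)%N]).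
  rewrite cardsT hHyp hI e mul0n add0n ltnS leqn0 => /eqP hp0.
  by rewrite hp0 in hp.
have [m hm] : exists m, n = m.+2 by exists (n - 2)%N; rewrite -subSn // -subSn ?subSS ?subn0 // ltnW.
rewrite {}hm in hE hI hHyp hk n2.
have : [set i | \dim (F i) == m.+1] != set0 by rewrite -card_gt0 hHyp.
case/set0Pn => i1; rewrite inE => /eqP hi1.
have hH : (\dim (F i1)).+1 = \dim (fullv : {vspace E}) by rewrite hi1 hE.
suff hs : (\sum_(i | ~~ (F i <= F i1)%VS) p.+1 ^ (\dim (F i)).-1 < p.+1 ^ \dim (F i1))%N.
  by have [x [_ hx]] := core hK hH hs; exists x.
pose cnt k := #|[set i | \dim (F i) == k]|.
have hd : forall i, (\dim (F i) <= m.+2)%N by move=> i; rewrite -hE dimvS ?subvf.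
have tot := sum_by_dim hd (fun _ => 1%N).
rewrite sum1_card hI (split_sum (fun k => cnt k * 1)%N) /= in tot.
have ck : forall k, (k < m)%N -> cnt k.+1 = p.
  by move=> k hk'; apply: hk; rewrite ltnS /= subn2 /=.
rewrite (eq_bigr (fun _ => p * 1)%N) in tot; last by move=> k _; rewrite ck.
rewrite sum_nat_const card_ord in tot.
have hHyp' : cnt m.+1 = p.+1 by rewrite /cnt -hHyp /= subn1.
rewrite -/(cnt 0) -/(cnt m.+1) -/(cnt m.+2) hHyp' in tot.
have [c0 cN] : cnt 0 = 0%N /\ cnt m.+2 = 0%N.
  move: tot; rewrite mulSn; move: (cnt 0) (cnt m.+2) (m * p)%N => a b q; lia.
have tw := sum_by_dim hd (fun k => p.+1 ^ k.-1)%N.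
rewrite (split_sum (fun k => cnt k * p.+1 ^ k.-1)%N) /= -/(cnt 0) -/(cnt m.+1) -/(cnt m.+2) c0 cN hHyp' !mul0n addn0 add0n in tw.
rewrite (eq_bigr (fun k : 'I_m => p * p.+1 ^ k)%N) in tw; last by move=> k _; rewrite ck.
have g := geom p m.
rewrite (bigD1 i1) //= hi1 /= in tw.
have le : (\sum_(i | ~~ (F i <= F i1)%VS) p.+1 ^ (\dim (F i)).-1 <=
          \sum_(i | i != i1) p.+1 ^ (\dim (F i)).-1)%N.
  rewrite big_mkcond [X in (_ <= X)%N]big_mkcond; apply: leq_sum => i _.
  case: (eqVneq i i1) => [->|_]; first by rewrite subvv.
  by case: ifP.
apply: leq_ltn_trans le _.
rewrite hi1 expnS.
move: tw g; set A := (\sum_(i | i != i1) _)%N; set B := (\sum_(k < m) _)%N; set X := (p.+1 ^ m)%N.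
move=> tw g. nia.
Qed.

Unset Implicit Arguments.

Theorem mainTheorem12 (K : fieldType) (E : vectType K) (n p : nat)
    (hp : (0 < p)%N) (hK : card_gt K p) (hE : \dim (fullv : {vspace E}) = n) :
  (forall (I : finType) (F : I -> {vspace E}),
      #|I| = ((n - 1) * p + 1)%N ->
      #|[set i | \dim (F i) == (n - 1)%N]| = p.+1 ->
      (forall k : nat, (1 <= k <= n - 2)%N -> #|[set i | \dim (F i) == k]| = p) ->
      exists x : E, forall i, x \notin F i)
  /\
  (forall (J : finType) (G : J -> {vspace E}),
      #|J| = ((n - 1) * p)%N ->
      (forall k : nat, (1 <= k <= n - 1)%N -> #|[set j | \dim (G j) == k]| = p) ->
      exists b : seq E, basis_of fullv b /\ (forall x, x \in b -> forall j, x \notin G j)).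
Proof.
split; [exact: part1 | exact: part2].
Qed.
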